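(* Let $X$ be a set and $\{d_r\colon X\times X\to\mathbb{R}_{\ge 0}\cup\{\infty\}\}_{r>0}$ a family of functions satisfying the Self-distance Axiom, Upper semi-continuity and the Weak triangle inequality (as described in the context). Equip $X$ with the topology having as basis the sets $N_r^{\varepsilon}(x)=\{y\in X\mid d_r(x,y)<\varepsilon\}$ for $x\in X$, $r>0$, $\varepsilon>0$. Then for every $x\in X$ and every $r>0$, the function \[ d_r(x,\cdot)\colon X\to\mathbb{R}_{\ge0}\cup\{\infty\},\quad y\mapsto d_r(x,y) \] is upper semi-continuous.
   Context: The axioms, required for all $x,y,z\in X$: (Self-distance Axiom) $d_r(x,x)=0$ for all $r>0$. (Upper semi-continuity) if $r_1\le r_2$ then $d_{r_1}(x,y)\le d_{r_2}(x,y)$; and if $d_r(x,y)<\varepsilon$ then there exists $\delta>0$ with $d_{r+\delta}(x,y)<\varepsilon$. (Weak triangle inequality) for $r_1,r_2,r_3>0$, if $d_{r_1+r_2}(x,y)<r_3$ and $d_{r_1+r_2+r_3}(y,z)<r_2$, then $d_{r_1}(x,z)\le d_{r_1+r_2}(x,y)+d_{r_1+r_2+r_3}(y,z)$. The functions $d_r$ need not be symmetric. Under these axioms the sets $N_r^\varepsilon(x)$ form a basis of a topology on $X$. *)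

(* Defs.v *)
From mathcomp Require Import all_boot all_order all_algebra.
From mathcomp Require Import boolp classical_sets reals constructive_ereal ereal.
Set Implicit Arguments. Unset Strict Implicit. Unset Printing Implicit Defensive.
Import Order.TTheory GRing.Theory Num.Theory.
Local Open Scope ring_scope.
Local Open Scope ereal_scope.
Local Open Scope classical_set_scope.

Section Defs.
Variables (R : realType) (X : Type) (d : R -> X -> X -> \bar R).

Definition nonneg_valued : Prop :=
  forall (r : R) (x y : X), (0 < r)%R -> 0 <= d r x y /\ d r x y != -oo.

Definition self_distance_axiom : Prop :=
  forall (x : X) (r : R), (0 < r)%R -> d r x x = 0.

Definition upper_semicontinuity_axiom : Prop :=
  (forall (x y : X) (r1 r2 : R), (0 < r1)%R -> (r1 <= r2)%R ->
      d r1 x y <= d r2 x y) /\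
  (forall (x y : X) (r eps : R), (0 < r)%R -> d r x y < eps%:E ->
      exists delta : R, (0 < delta)%R /\ d (r + delta) x y < eps%:E).

Definition weak_triangle_inequality : Prop :=
  forall (x y z : X) (r1 r2 r3 : R), (0 < r1)%R -> (0 < r2)%R -> (0 < r3)%R ->
    d (r1 + r2) x y < r3%:E -> d (r1 + r2 + r3) y z < r2%:E ->
    d r1 x z <= d (r1 + r2) x y + d (r1 + r2 + r3) y z.

Definition Nball (r eps : R) (x : X) : set X := [set y | d r x y < eps%:E].

(* The topology with basis { N_r^eps(x) | x in X, r > 0, eps > 0 }:
   U is open iff it is a union of basis sets. *)
Definition dopen (U : set X) : Prop :=
  forall y, U y -> exists (x : X) (r eps : R),
    (0 < r)%R /\ (0 < eps)%R /\ Nball r eps x y /\ Nball r eps x `<=` U.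

Definition usc_wrt (f : X -> \bar R) : Prop :=
  forall t : R, dopen [set y | f y < t%:E].
End Defs.

(* Main.v *)
Require Import Defs.
From mathcomp Require Import all_boot all_order all_algebra.
From mathcomp Require Import boolp classical_sets reals constructive_ereal ereal.
From mathcomp Require Import lra.
Import Order.TTheory GRing.Theory Num.Theory.
Local Open Scope ring_scope.

Lemma fin_of {R : realType} {e : \bar R} {t : R} :
  (0 <= e)%E -> (e < t%:E)%E -> exists v : R, e = v%:E /\ 0 <= v /\ v < t.
Proof.
case: e => [v| |] //= h1 h2.
  by exists v; rewrite lee_fin in h1; rewrite lte_fin in h2.
Qed.

Theorem corollary2p5 (R : realType) (X : Type) (d : R -> X -> X -> \bar R) :
  nonneg_valued d ->
  self_distance_axiom d ->
  upper_semicontinuity_axiom d ->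
  weak_triangle_inequality d ->
  forall (x : X) (r : R), 0 < r -> usc_wrt d (d r x).
Proof.
move=> nn sd [mono usc] wt x r r0 t y /= hy.
have [u [hu [u0 ut]]] := fin_of (proj1 (nn r x y r0)) hy.
set g := (t - u) / 2.
have g0 : 0 < g by rewrite /g; lra.
have hug : (d r x y < (u + g)%:E)%E by rewrite hu lte_fin; lra.
have [delta [dl0 hd]] := usc x y r (u + g) r0 hug.
set r2 := Num.min delta g.
have r20 : 0 < r2 by rewrite /r2 lt_min dl0 g0.
have r2d : r2 <= delta by rewrite /r2 ge_min lexx.
have r2g : r2 <= g by rewrite /r2 ge_min lexx orbT.
have h2 : (d (r + r2)%R x y <= d (r + delta)%R x y)%E.
  by apply: mono; [lra | lra].
have h3 : (d (r + r2)%R x y < (u + g)%:E)%E by apply: le_lt_trans h2 hd.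
have [v [hv [v0 vl]]] := fin_of (proj1 (nn (r + r2) x y (addr_gt0 r0 r20))) h3.
set r3 := u + g + 1.
exists y, (r + r2 + r3), r2.
have s0 : 0 < r + r2 + r3 by rewrite /r3; lra.
split => //; split => //; split.
  by rewrite /Nball /= sd // lte_fin.
move=> w; rewrite /Nball /= => hw.
have [z [hz [z0 zl]]] := fin_of (proj1 (nn _ y w s0)) hw.
have r30 : 0 < r3 by rewrite /r3; lra.
have h4 : (d (r + r2)%R x y < r3%:E)%E by rewrite hv lte_fin /r3; lra.
have := wt x y w r r2 r3 r0 r20 r30 h4 hw.
rewrite hv hz -EFinD => h; apply: le_lt_trans h _.
have eg : g * 2 = t - u by rewrite /g divfK // pnatr_eq0.
rewrite lte_fin; lra.
Qed.
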